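(* Let $A\in\mathbb{R}^{n\times d}$ with largest singular value $\sigma_1$, $S\in\mathbb{R}^{d\times m}$, $\lambda>0$, and let $f:\mathbb{R}^n\to\mathbb{R}$ be convex, differentiable and $L$-Lipschitz (its gradient is not assumed Lipschitz). Let $x^*$ be the unique minimizer of $x\mapsto f(Ax)+\frac{\lambda}{2}\|x\|_2^2$, let $\alpha^*$ be any minimizer of $\alpha\mapsto f(AS\alpha)+\frac{\lambda}{2}\|S\alpha\|_2^2$, and set $\widetilde{x}=-\frac{1}{\lambda}A^\top\nabla f(AS\alpha^* )$. Then $$\|\widetilde{x}-x^*\|_2\le\frac{6L}{\lambda}\sqrt{\sigma_1 Z_f}.$$
   Context: $f^*(z)=\sup_w\{w^\top z-f(w)\}$ is the Fenchel conjugate of $f$ with domain $\mathrm{dom} f^*$. $z^*=\nabla f(Ax^* )$. $P_S=S(S^\top S)^\dagger S^\top$, $P_S^\perp=I_d-P_S$, and $Z_f=Z_f(A,S)=\sup_{\Delta\in(\mathrm{dom} f^*-z^* ),\,\Delta\ne0}\left(\frac{\Delta^\top AP_S^\perp A^\top\Delta}{\|\Delta\|_2^2}\right)^{1/2}$. *)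

(* Defs.v *)
From Stdlib Require Import Reals.
From mathcomp Require Import all_boot.
Set Implicit Arguments. Unset Strict Implicit. Unset Printing Implicit Defensive.
Local Open Scope R_scope.

Definition vec (n : nat) := 'I_n -> R.
Definition mat (n d : nat) := 'I_n -> 'I_d -> R.

Definition sumI (n : nat) (F : 'I_n -> R) : R :=
  foldr (fun i acc => F i + acc) 0 (enum 'I_n).

Definition dot {n} (u v : vec n) : R := sumI (fun i => u i * v i).
Definition norm2 {n} (u : vec n) : R := sqrt (dot u u).
Definition vadd {n} (u v : vec n) : vec n := fun i => u i + v i.
Definition vsub {n} (u v : vec n) : vec n := fun i => u i - v i.
Definition vscale {n} (a : R) (u : vec n) : vec n := fun i => a * u i.
Definition vzero {n} : vec n := fun _ => 0.

Definition mv {n d} (A : mat n d) (x : vec d) : vec n :=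
  fun i => sumI (fun j => A i j * x j).
Definition tr {n d} (A : mat n d) : mat d n := fun j i => A i j.
Definition mm {n d m} (A : mat n d) (B : mat d m) : mat n m :=
  fun i k => sumI (fun j => A i j * B j k).
Definition idm {d} : mat d d := fun i j => if i == j then 1 else 0.
Definition msub {n d} (A B : mat n d) : mat n d := fun i j => A i j - B i j.

Definition convex {n} (f : vec n -> R) : Prop :=
  forall x y t, 0 <= t <= 1 ->
    f (vadd (vscale t x) (vscale (1 - t) y)) <= t * f x + (1 - t) * f y.

Definition lipschitz {n} (L : R) (f : vec n -> R) : Prop :=
  forall x y, Rabs (f x - f y) <= L * norm2 (vsub x y).

Definition is_gradient {n} (f : vec n -> R) (g : vec n -> vec n) : Prop :=
  forall x eps, 0 < eps -> exists delta, 0 < delta /\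
    forall h, 0 < norm2 h < delta ->
      Rabs (f (vadd x h) - f x - dot (g x) h) <= eps * norm2 h.

Definition is_minimizer {T} (F : T -> R) (x : T) : Prop := forall y, F x <= F y.

Definition is_largest_singular_value {n d} (A : mat n d) (sigma : R) : Prop :=
  0 <= sigma /\
  ((d = 0%nat /\ sigma = 0) \/
   (exists v : vec d, v <> vzero /\ mv (mm (tr A) A) v = vscale (sigma ^ 2) v)) /\
  (forall (mu : R) (v : vec d), v <> vzero -> mv (mm (tr A) A) v = vscale mu v ->
       mu <= sigma ^ 2).

Definition is_pinv {m k} (M : mat m k) (Mp : mat k m) : Prop :=
  mm (mm M Mp) M = M /\ mm (mm Mp M) Mp = Mp /\
  tr (mm M Mp) = mm M Mp /\ tr (mm Mp M) = mm Mp M.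

Definition PS {d m} (S : mat d m) (Mp : mat m m) : mat d d := mm (mm S Mp) (tr S).
Definition PSperp {d m} (S : mat d m) (Mp : mat m m) : mat d d := msub idm (PS S Mp).

(* z in dom f^* : the supremum defining f^*(z) is finite *)
Definition in_dom_conj {n} (f : vec n -> R) (z : vec n) : Prop :=
  exists M, forall w, dot w z - f w <= M.

(* values whose supremum is Z_f (0 added, convention sup of empty set = 0;
   all the other values are >= 0, so this changes nothing otherwise) *)
Definition Zf_values {n d m} (f : vec n -> R) (zstar : vec n) (A : mat n d)
    (S : mat d m) (Mp : mat m m) (r : R) : Prop :=
  r = 0 \/
  exists z : vec n, in_dom_conj f z /\
    let Delta := vsub z zstar in
    Delta <> vzero /\
    r = sqrt (dot Delta (mv A (mv (PSperp S Mp) (mv (tr A) Delta))) / (norm2 Delta ^ 2)).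

(* Main.v *)
Require Import Defs.
From Stdlib Require Import Reals Lra FunctionalExtensionality.
From mathcomp Require Import all_boot all_order all_algebra.
From mathcomp Require all_classical all_reals.
From mathcomp Require topology normedtype derive.
From mathcomp Require Import Rstruct.
From mathcomp Require Rstruct_topology.
From mathcomp Require ring lra.
Set Implicit Arguments. Unset Strict Implicit. Unset Printing Implicit Defensive.
Local Open Scope R_scope.

Module BridgeM.
Import Order.TTheory GRing.Theory Num.Theory.

Lemma sumIE n (F : 'I_n -> R) : sumI F = (\sum_i F i)%R.
Proof. rewrite -big_enum /= /sumI. by rewrite unlock /reducebig /=. Qed.

Definition cv {n} (x : vec n) : 'cV[R]_n := \col_i x i.
Definition mx {n d} (A : mat n d) : 'M[R]_(n, d) := \matrix_(i, j) A i j.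

Local Open Scope ring_scope.

Lemma cv_inj n (u v : vec n) : cv u = cv v -> u = v.
Proof.
move=> /colP H; apply: functional_extensionality => i.
by have := H i; rewrite !mxE.
Qed.

Lemma cv_mv n d (A : mat n d) x : cv (mv A x) = mx A *m cv x.
Proof.
apply/colP => i; rewrite !mxE /mv sumIE; apply: eq_bigr => j _; by rewrite !mxE.
Qed.

Lemma dotE n (u v : vec n) : dot u v = ((cv u)^T *m cv v) 0 0.
Proof.
rewrite /dot sumIE !mxE; apply: eq_bigr => j _; by rewrite !mxE.
Qed.

Lemma mx_mm n d k (A : mat n d) (B : mat d k) : mx (mm A B) = mx A *m mx B.
Proof.
apply/matrixP => i j; rewrite !mxE /mm sumIE; apply: eq_bigr => l _; by rewrite !mxE.
Qed.

Lemma mx_tr n d (A : mat n d) : mx (tr A) = (mx A)^T.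
Proof. by apply/matrixP => i j; rewrite !mxE. Qed.

Lemma mx_idm d : mx (@idm d) = 1%:M.
Proof. by apply/matrixP => i j; rewrite !mxE /idm eq_sym; case: (j == i). Qed.

Lemma mx_msub n d (A B : mat n d) : mx (msub A B) = mx A - mx B.
Proof. by apply/matrixP => i j; rewrite !mxE. Qed.

Lemma cv_vsub n (u v : vec n) : cv (vsub u v) = cv u - cv v.
Proof. by apply/colP => i; rewrite !mxE. Qed.
Lemma cv_vadd n (u v : vec n) : cv (vadd u v) = cv u + cv v.
Proof. by apply/colP => i; rewrite !mxE. Qed.
Lemma cv_vscale n a (u : vec n) : cv (vscale a u) = a *: cv u.
Proof. by apply/colP => i; rewrite !mxE. Qed.
Lemma cv_vzero n : cv (@vzero n) = 0.
Proof. by apply/colP => i; rewrite !mxE. Qed.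

Lemma mx_inj n d (A B : mat n d) : mx A = mx B -> A = B.
Proof.
move=> /matrixP H; apply: functional_extensionality => i;
apply: functional_extensionality => j.
by have := H i j; rewrite !mxE.
Qed.

End BridgeM.
Import BridgeM.

Module CoreM.
Import mathcomp.algebra_tactics.ring mathcomp.algebra_tactics.lra.
Import Order.TTheory GRing.Theory Num.Theory.
Local Open Scope ring_scope.

Definition ip {n} (u v : 'cV[R]_n) : R := (u^T *m v) 0 0.

Lemma ipE n (u v : 'cV[R]_n) : ip u v = \sum_i u i 0 * v i 0.
Proof. rewrite /ip !mxE; apply: eq_bigr => i _; by rewrite !mxE. Qed.

Lemma ipC n (u v : 'cV[R]_n) : ip u v = ip v u.
Proof. rewrite !ipE; apply: eq_bigr => i _; by rewrite mulrC. Qed.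

Lemma ipDr n (u v w : 'cV[R]_n) : ip u (v + w) = ip u v + ip u w.
Proof. by rewrite /ip mulmxDr mxE. Qed.
Lemma ipDl n (u v w : 'cV[R]_n) : ip (v + w) u = ip v u + ip w u.
Proof. by rewrite /ip linearD /= mulmxDl mxE. Qed.
Lemma ipNr n (u v : 'cV[R]_n) : ip u (- v) = - ip u v.
Proof. by rewrite /ip mulmxN mxE. Qed.
Lemma ipNl n (u v : 'cV[R]_n) : ip (- u) v = - ip u v.
Proof. by rewrite /ip linearN /= mulNmx mxE. Qed.
Lemma ipBr n (u v w : 'cV[R]_n) : ip u (v - w) = ip u v - ip u w.
Proof. by rewrite ipDr ipNr. Qed.
Lemma ipBl n (u v w : 'cV[R]_n) : ip (v - w) u = ip v u - ip w u.
Proof. by rewrite ipDl ipNl. Qed.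
Lemma ipZr n a (u v : 'cV[R]_n) : ip u (a *: v) = a * ip u v.
Proof. by rewrite /ip -scalemxAr mxE. Qed.
Lemma ipZl n a (u v : 'cV[R]_n) : ip (a *: u) v = a * ip u v.
Proof. by rewrite ipC ipZr ipC. Qed.
Lemma ip0r n (u : 'cV[R]_n) : ip u 0 = 0.
Proof. by rewrite /ip mulmx0 mxE. Qed.
Lemma ipMl n k (M : 'M[R]_(n,k)) (u : 'cV[R]_n) (v : 'cV[R]_k) :
  ip u (M *m v) = ip (M^T *m u) v.
Proof. by rewrite /ip trmx_mul trmxK mulmxA. Qed.

Lemma ip_ge0 n (u : 'cV[R]_n) : 0 <= ip u u.
Proof. rewrite ipE; apply: sumr_ge0 => i _; exact: sqr_ge0. Qed.

Lemma ip_eq0 n (u : 'cV[R]_n) : ip u u = 0 -> u = 0.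
Proof.
rewrite ipE => /eqP; rewrite psumr_eq0; last by move=> i _; exact: sqr_ge0.
move=> /allP H; apply/matrixP => i j; rewrite mxE.
have := H i (mem_index_enum i); rewrite /= -expr2 sqrf_eq0 => /eqP.
by rewrite (ord1 j).
Qed.

Lemma ip_CS n (u v : 'cV[R]_n) : ip u v ^+ 2 <= ip u u * ip v v.
Proof.
have H t : 0 <= ip u u - 2 * t * ip u v + t ^+ 2 * ip v v.
  have := ip_ge0 (u - t *: v).
  rewrite !ipBl !ipBr !ipZl !ipZr (ipC v u). lra.
have Hv := ip_ge0 v; have Hu := ip_ge0 u.
have [v0|vpos] := eqVneq (ip v v) 0.
  rewrite v0 mulr0.
  have [->|uv] := eqVneq (ip u v) 0; first by rewrite expr0n.
  have := H ((ip u u + 1) / (2 * ip u v)); rewrite v0 mulr0 addr0.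
  have -> : 2 * ((ip u u + 1) / (2 * ip u v)) * ip u v = ip u u + 1 by field.
  lra.
have vp : 0 < ip v v by rewrite lt_def vpos Hv.
have := H (ip u v / ip v v).
have -> : ip u u - 2 * (ip u v / ip v v) * ip u v + (ip u v / ip v v) ^+ 2 * ip v v
   = (ip u u * ip v v - ip u v ^+ 2) / ip v v by field.
move=> H2.
have := mulr_ge0 H2 (ltW vp).
rewrite -mulrA mulVf // mulr1; lra.
Qed.

Lemma trmx_eq0 n k (N : 'M[R]_(n, k)) : N^T *m N = 0 -> N = 0.
Proof.
move=> H; apply/matrixP => i j; rewrite mxE.
have := congr1 (fun M : 'M[R]_k => M j j) H; rewrite !mxE => /eqP.
rewrite psumr_eq0; last by move=> l _; rewrite mxE; exact: sqr_ge0.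
move=> /allP /(_ i (mem_index_enum i)) /=; rewrite mxE -expr2 sqrf_eq0.
by move/eqP.
Qed.

Section Penrose.
Variables (m : nat) (M X : 'M[R]_m).
Definition penrose := [/\ M *m X *m M = M, X *m M *m X = X,
  (M *m X)^T = M *m X & (X *m M)^T = X *m M].

Lemma penrose_uniq Y : penrose -> [/\ M *m Y *m M = M, Y *m M *m Y = Y,
  (M *m Y)^T = M *m Y & (Y *m M)^T = Y *m M] -> X = Y.
Proof.
move=> [P1 P2 P3 P4] [Q1 Q2 Q3 Q4].
have eX : X = X *m M *m Y.
  transitivity (X *m (M *m X)^T); first by rewrite P3 mulmxA P2.
  rewrite trmx_mul -{1}Q1 [(M *m Y *m M)^T]trmx_mul [(M *m Y)^T]trmx_mul.
  rewrite [X^T *m (M^T *m _)]mulmxA -[X^T *m M^T]trmx_mul -[Y^T *m M^T]trmx_mul P3 Q3.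
  by rewrite !mulmxA P2.
have eY : Y = X *m M *m Y.
  transitivity ((Y *m M)^T *m Y); first by rewrite Q4 Q2.
  rewrite trmx_mul -{1}P1 [(M *m X *m M)^T]trmx_mul [(M *m X)^T]trmx_mul.
  rewrite mulmxA -[M^T *m X^T]trmx_mul -[(X *m M)^T *m M^T *m Y^T]mulmxA.
  by rewrite -[M^T *m Y^T]trmx_mul P4 Q4 -mulmxA Q2.
by rewrite eX -eY.
Qed.

Lemma penrose_sym : M^T = M -> penrose -> X^T = X.
Proof.
move=> sM P; have [P1 P2 P3 P4] := P.
symmetry; apply: penrose_uniq => //; split.
- by apply: trmx_inj; rewrite !trmx_mul !trmxK sM mulmxA P1.
- by apply: trmx_inj; rewrite !trmx_mul !trmxK sM mulmxA P2.
- by rewrite trmx_mul trmxK sM -P4 trmx_mul sM.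
- by rewrite trmx_mul trmxK sM -P3 trmx_mul sM.
Qed.
End Penrose.

Section Proj.
Variables (d m : nat) (S : 'M[R]_(d, m)) (X : 'M[R]_m).
Hypothesis HP : penrose (S^T *m S) X.

Lemma SXM : S *m X *m (S^T *m S) = S.
Proof.
have [P1 P2 P3 P4] := HP.
apply/subr0_eq.
have -> : S *m X *m (S^T *m S) - S = S *m (X *m (S^T *m S) - 1%:M).
  by rewrite mulmxBr mulmx1 !mulmxA.
apply: trmx_eq0.
rewrite trmx_mul -mulmxA (mulmxA S^T) mulmxBr mulmx1 [S^T *m S *m (X *m _)]mulmxA P1 subrr.
by rewrite mulmx0.
Qed.

Definition PSm := S *m X *m S^T.
Definition QSm := 1%:M - PSm.

Lemma X_sym : X^T = X.
Proof. apply: penrose_sym HP; by rewrite trmx_mul trmxK. Qed.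

Lemma PS_sym : PSm^T = PSm.
Proof. by rewrite /PSm !trmx_mul trmxK X_sym mulmxA. Qed.

Lemma PS_S : PSm *m S = S.
Proof. by rewrite /PSm -mulmxA SXM. Qed.


Lemma PS_idem : PSm *m PSm = PSm.
Proof. by rewrite {2}/PSm mulmxA mulmxA PS_S. Qed.

Lemma QS_sym : QSm^T = QSm.
Proof. by rewrite /QSm linearB /= trmx1 PS_sym. Qed.

Lemma PQ0 : PSm *m QSm = 0.
Proof. by rewrite /QSm mulmxBr mulmx1 PS_idem subrr. Qed.

Lemma QS_idem : QSm *m QSm = QSm.
Proof. by rewrite {1}/QSm mulmxBl mul1mx PQ0 subr0. Qed.


Lemma ipQ (u v : 'cV_d) : ip u (QSm *m v) = ip (QSm *m u) (QSm *m v).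
Proof. by rewrite ipMl QS_sym -{1}QS_idem -mulmxA ipMl QS_sym. Qed.

Lemma ipP (u v : 'cV_d) : ip u (PSm *m v) = ip (PSm *m u) (PSm *m v).
Proof. by rewrite ipMl PS_sym -{1}PS_idem -mulmxA ipMl PS_sym. Qed.

Lemma ip_split (u : 'cV_d) : ip u u = ip u (PSm *m u) + ip u (QSm *m u).
Proof. by rewrite -ipDr /QSm mulmxBl mul1mx addrC subrK. Qed.

Lemma QS_contr (u : 'cV_d) : ip (QSm *m u) (QSm *m u) <= ip u u.
Proof.
rewrite (ip_split u) -ipQ ipP lerDr; exact: ip_ge0.
Qed.
End Proj.

Lemma ip_sub_le n (u v : 'cV[R]_n) : ip (u - v) (u - v) <= 2 * ip u u + 2 * ip v v.
Proof.
have := ip_ge0 (u + v).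
rewrite ipBl !ipBr ipDl !ipDr (ipC v u).
set x := ip u u; set y := ip u v; set z := ip v v.
lra.
Qed.

Lemma core n d m (A : 'M[R]_(n,d)) (S : 'M[R]_(d,m)) (X : 'M[R]_m)
  (lam L sig Zf : R) (xs : 'cV_d) (al : 'cV_m) (zs zh : 'cV_n) :
  0 < lam -> 0 <= L -> 0 <= Zf -> Zf <= sig ->
  penrose (S^T *m S) X ->
  (forall v : 'cV_n, ip (A^T *m v) (A^T *m v) <= sig^+2 * ip v v) ->
  ip zs zs <= L^+2 -> ip zh zh <= L^+2 ->
  A^T *m zs + lam *: xs = 0 ->
  S^T *m (A^T *m zh + lam *: (S *m al)) = 0 ->
  0 <= ip (zh - zs) (A *m (S *m al - xs)) ->
  ip (zh - zs) (A *m (QSm S X *m (A^T *m (zh - zs)))) <= Zf^+2 * ip (zh - zs) (zh - zs) ->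
  ip ((- lam^-1) *: (A^T *m zh) - xs) ((- lam^-1) *: (A^T *m zh) - xs)
    <= (6 * L / lam)^+2 * (sig * Zf).
Proof.
move=> lam0 L0 Zf0 Zfs HP Hspec Hzs Hzh H1 H2 H3 H6.
have lamn0 : lam != 0 by rewrite gt_eqF.
set a := A^T *m zh; set b := A^T *m zs; set dl := a - b.
have edl : A^T *m (zh - zs) = dl by rewrite mulmxBr.
have exs : xs = (- lam^-1) *: b.
  apply: (scalerI lamn0); rewrite scalerA mulrN mulfV // scaleN1r.
  by apply/eqP; rewrite -addr_eq0 addrC; apply/eqP.
have ew : (- lam^-1) *: a - xs = (- lam^-1) *: dl.
  by rewrite exs /dl scalerBr.
rewrite ew ipZl ipZr.
have eSal : lam *: (S *m al) = - (PSm S X *m a).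
  have : PSm S X *m (a + lam *: (S *m al)) = 0.
    by rewrite /PSm -mulmxA H2 mulmx0.
  rewrite mulmxDr -scalemxAr [PSm S X *m (S *m al)]mulmxA PS_S // addrC => /eqP; rewrite addr_eq0 => /eqP ->.
  by [].
have key : ip dl (PSm S X *m dl) <= ip dl (QSm S X *m b).
  have : 0 <= ip dl (lam *: (S *m al - xs)).
    by rewrite ipZr; apply: mulr_ge0; [exact: ltW|rewrite -edl -ipMl].
  rewrite scalerBr eSal exs scalerA mulrN mulfV // scaleN1r opprK.
  have -> : - (PSm S X *m a) + b = - (PSm S X *m dl) + QSm S X *m b.
    by rewrite /dl /QSm mulmxBr mulmxBl mul1mx opprB [RHS]addrC addrA subrK addrC.
  rewrite ipDr ipNr; lra.
set D := ip dl dl.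
set E := ip dl (QSm S X *m dl).
set C := ip dl (QSm S X *m b).
have eD : D = ip dl (PSm S X *m dl) + E by rewrite /D (ip_split S X).
have HE : E <= Zf^+2 * (4 * L^+2).
  have : E <= Zf^+2 * ip (zh - zs) (zh - zs) by rewrite /E -edl -ipMl.
  have h4 : ip (zh - zs) (zh - zs) <= 4 * L^+2.
    apply: (le_trans (ip_sub_le zh zs)); lra.
  move=> h; apply: (le_trans h); apply: ler_wpM2l => //; exact: sqr_ge0.
have E0 : 0 <= E by rewrite /E ipQ //; exact: ip_ge0.
have HF : ip (QSm S X *m b) (QSm S X *m b) <= sig^+2 * L^+2.
  apply: (le_trans (QS_contr HP b)); apply: (le_trans (Hspec zs)).
  apply: ler_wpM2l => //; exact: sqr_ge0.
have F0 := ip_ge0 (QSm S X *m b).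
have HC : C ^+ 2 <= E * ip (QSm S X *m b) (QSm S X *m b).
  by rewrite /C /E (ipQ HP dl b) (ipQ HP dl dl); exact: ip_CS.
have sig0 : 0 <= sig by apply: le_trans Zfs.
have HC2 : C <= 2 * L^+2 * Zf * sig.
  have h : C ^+ 2 <= (2 * L^+2 * Zf * sig) ^+ 2.
    apply: (le_trans HC).
    have -> : (2 * L^+2 * Zf * sig) ^+ 2 = (Zf^+2 * (4 * L^+2)) * (sig^+2 * L^+2) by ring.
    apply: ler_pM => //.
  have p : 0 <= 2 * L^+2 * Zf * sig.
    by apply: mulr_ge0 => //; apply: mulr_ge0 => //; apply: mulr_ge0 => //; exact: sqr_ge0.
  have [Cn|Cp] := lerP C 0; first by apply: le_trans Cn p.
  by rewrite -(ler_pXn2r (n:=2)) // ?nnegrE ?ltW.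
have HD : D <= 6 * L^+2 * sig * Zf.
  have hE : E <= 4 * L^+2 * Zf * sig.
    apply: (le_trans HE).
    have -> : Zf ^+ 2 * (4 * L ^+ 2) = (4 * L^+2 * Zf) * Zf by ring.
    apply: ler_wpM2l => //; apply: mulr_ge0 => //; apply: mulr_ge0 => //; exact: sqr_ge0.
  have -> : 6 * L^+2 * sig * Zf = 2 * L^+2 * Zf * sig + 4 * L^+2 * Zf * sig by ring.
  have key2 : ip dl (PSm S X *m dl) <= C := key.
  rewrite eD; lra.
have e1 : - lam^-1 * (- lam^-1 * D) = D / lam^+2.
  by field.
rewrite e1.
have -> : (6 * L / lam) ^+ 2 * (sig * Zf) = (36 * L^+2 * sig * Zf) / lam^+2 by field.
apply: ler_wpM2r; first by rewrite invr_ge0; exact: sqr_ge0.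
have : 0 <= L^+2 * sig * Zf.
  by apply: mulr_ge0 => //; apply: mulr_ge0 => //; exact: sqr_ge0.
lra.
Qed.

End CoreM.
Import CoreM.

Module SpecM.
Import all_classical all_reals topology normedtype derive Rstruct_topology.
Import mathcomp.algebra_tactics.ring mathcomp.algebra_tactics.lra.
Import Order.TTheory GRing.Theory Num.Theory.
Import numFieldTopology.Exports numFieldNormedType.Exports.
Local Open Scope classical_set_scope.
Local Open Scope ring_scope.

Lemma cont_sum d (I : Type) (s : seq I) (F : I -> 'rV[R]_d -> R) :
  (forall i, continuous (F i)) -> continuous (fun y => \sum_(i <- s) F i y).
Proof.
move=> H; elim: s => [|i s IH].
  rewrite (_ : (fun _ => _) = (fun _ => 0)); first exact: cst_continuous.
  by apply: funext => y; rewrite big_nil.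
rewrite (_ : (fun _ => _) = (F i + (fun y => \sum_(j <- s) F j y))%R).
  move=> y. 
  have h1 := H i y. have h2 := IH y.
  exact: (@continuousD R R^o _ (F i) _ y h1 h2).
by apply: funext => y; rewrite big_cons.
Qed.

Lemma cont_coord d (j : 'I_d) : continuous (fun y : 'rV[R]_d => y 0 j).
Proof. move=> y; exact: (@coord_continuous R 1 d 0 j y). Qed.

Lemma cont_mul d (f g : 'rV[R]_d -> R) : continuous f -> continuous g ->
  continuous (fun y => f y * g y).
Proof. move=> hf hg y.
exact: (@continuousM R _ f g y (hf y) (hg y)).
Qed.

Lemma cont_cst d (c : R) : continuous (fun _ : 'rV[R]_d => c).
Proof. exact: cst_continuous. Qed.

Definition nn d (y : 'rV[R]_d) := ip y^T y^T.
Definition gA n d (A : 'M[R]_(n, d)) (y : 'rV[R]_d) := ip (A *m y^T) (A *m y^T).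

Lemma cont_lin n d (A : 'M[R]_(n, d)) (i : 'I_n) :
  continuous (fun y : 'rV[R]_d => (A *m y^T) i 0).
Proof.
have -> : (fun y : 'rV[R]_d => (A *m y^T) i 0) =
  (fun y : 'rV[R]_d => \sum_(j <- index_enum 'I_d) A i j * y 0 j).
  by apply: funext => y; rewrite mxE; apply: eq_bigr => j _; rewrite mxE.
apply: cont_sum => j; apply: cont_mul; [exact: cont_cst|exact: cont_coord].
Qed.

Lemma cont_gA n d (A : 'M[R]_(n, d)) : continuous (gA A).
Proof.
rewrite (_ : gA A = (fun y : 'rV[R]_d => \sum_(i <- index_enum 'I_n) (A *m y^T) i 0 * (A *m y^T) i 0)).
  by apply: cont_sum => i; apply: cont_mul; exact: cont_lin.
by apply: funext => y; rewrite /gA ipE.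
Qed.

Lemma cont_nn d : continuous (@nn d).
Proof.
rewrite (_ : @nn d = (fun y : 'rV[R]_d => \sum_(i <- index_enum 'I_d) y 0 i * y 0 i)).
  by apply: cont_sum => i; apply: cont_mul; exact: cont_coord.
by apply: funext => y; rewrite /nn ipE; apply: eq_bigr => i _; rewrite !mxE.
Qed.

Lemma coord_le_nn d (y : 'rV[R]_d) i : (y 0 i) ^+ 2 <= nn y.
Proof.
rewrite /nn ipE (bigD1 i) //= !mxE -expr2 lerDl.
by apply: sumr_ge0 => j _; rewrite !mxE; exact: mulr_ge0_le0 || exact: sqr_ge0 || (rewrite -expr2; exact: sqr_ge0).
Qed.

Lemma max_sphere n d (A : 'M[R]_(n, d.+1)) :
  exists2 c : 'rV[R]_d.+1, nn c = 1 & forall y, nn y = 1 -> gA A y <= gA A c.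
Proof.
pose K := [set y : 'rV[R]_d.+1 | nn y = 1].
have K0 : K !=set0.
  exists (delta_mx 0 ord0); rewrite /K /= /nn /ip trmxK trmx_delta mul_delta_mx mxE.
  by rewrite !eqxx.
have Kcl : closed K.
  have -> : K = (@nn d.+1) @^-1` [set x | x = 1] by [].
  apply: preimage_closed; last exact: closed_eq.
  move=> y _; exact: cont_nn.
have Kc : compact K.
  have cube := @rV_compact _ _ (fun _ : 'I_d.+1 => (`[(-1 : R), 1])%classic) (fun _ => @segment_compact _ (-1) 1).
  apply: (subclosed_compact Kcl cube).
  move=> y /= Hy i; rewrite /= in_itv /=.
  have := coord_le_nn y i; rewrite Hy => h.
  rewrite -ler_norml -(@expr_le1 _ 2) // -normrX ger0_norm //; exact: sqr_ge0.
have cg : {within K, continuous (gA A)}.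
  by apply: continuous_subspaceT => y; exact: cont_gA.
have [c cK cmax] := EVT_max_rV K0 Kc cg.
exists c; first by move: cK; rewrite inE.
by move=> y Hy; apply: cmax; rewrite inE.
Qed.

Lemma spec_bound n d (A : 'M[R]_(n, d)) (sig : R) :
  (forall mu (v : 'cV_d), v != 0 -> (A^T *m A) *m v = mu *: v -> mu <= sig^+2) ->
  forall x : 'cV_d, ip (A *m x) (A *m x) <= sig^+2 * ip x x.
Proof.
case: d A => [|d] A H x.
  have -> : x = 0 by apply/matrixP => -[].
  by rewrite /ip !mulmx0 mxE mulr0.
have [c c1 cmax] := max_sphere A.
set x0 := c^T.
set m := gA A c.
have em : ip (A *m x0) (A *m x0) = m by [].
have ex0 : ip x0 x0 = 1 by [].
have m0 : 0 <= m by rewrite -em; exact: ip_ge0.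
have C1 : forall v : 'cV_d.+1, ip (A *m v) (A *m v) <= m * ip v v.
  move=> v.
  have [p0|pn0] := eqVneq (ip v v) 0.
    by rewrite (ip_eq0 p0) mulmx0 /ip !mulmx0 mxE mulr0.
  have pp : 0 < ip v v by rewrite lt_def pn0 ip_ge0.
  set s := Num.sqrt (ip v v).
  have sp : 0 < s by rewrite sqrtr_gt0.
  have s2 : s ^+ 2 = ip v v by rewrite sqr_sqrtr // ltW.
  have : gA A (s^-1 *: v)^T <= m.
    apply: cmax; rewrite /nn trmxK ipZl ipZr -s2; field.
    by rewrite gt_eqF.
  rewrite /gA trmxK -scalemxAr ipZl ipZr -s2 => h.
  have := ler_wpM2r (sqr_ge0 s) h.
  have -> : s^-1 * (s^-1 * ip (A *m v) (A *m v)) * s ^+ 2 = ip (A *m v) (A *m v).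
    by field; rewrite gt_eqF.
  by [].
set u := A^T *m (A *m x0) - m *: x0.
have C2 : u = 0.
  apply: ip_eq0.
  set t := (m + 1)^-1.
  have tp : 0 < t by rewrite invr_gt0; lra.
  have mt : m * t < 1.
    rewrite /t ltr_pdivrMr; lra.
  have h := C1 (x0 + t *: u).
  rewrite mulmxDr -scalemxAr !ipDl !ipDr !ipZl !ipZr em ex0 in h.
  have e1 : ip (A *m x0) (A *m u) = ip u u + m * ip x0 u.
    rewrite ipMl (_ : A^T *m (A *m x0) = u + m *: x0); last by rewrite /u subrK.
    by rewrite ipDl ipZl.
  have e2 : ip (A *m u) (A *m x0) = ip u u + m * ip x0 u.
    by rewrite ipC e1.
  rewrite e1 e2 (ipC u x0) in h.
  have q0 := ip_ge0 (A *m u).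
  have p0 := ip_ge0 u.
  set p := ip u u in h p0 *.
  set q := ip (A *m u) (A *m u) in h q0.
  set b := ip x0 u in h.
  have h2 : t * p * (2 - m * t) <= 0.
    have -> : t * p * (2 - m * t) = (m + t * (p + m * b) + (t * (p + m * b) + t * (t * q))) - m * (1 + t * b + (t * b + t * (t * p))) - t ^+ 2 * q by ring.
    have : 0 <= t ^+ 2 * q by apply: mulr_ge0 => //; exact: sqr_ge0.
    lra.
  apply/eqP; rewrite eq_le p0 andbT.
  have : 0 < t * (2 - m * t) by apply: mulr_gt0 => //; lra.
  move=> h3; rewrite -(pmulr_rle0 _ h3); move: h2; rewrite mulrAC //.
have Hm : m <= sig ^+ 2.
  apply: (H m x0).
    by apply/eqP => e; move: ex0; rewrite e /ip mulmx0 mxE => /eqP; rewrite eq_sym oner_eq0.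
  by apply/eqP; rewrite -mulmxA -subr_eq0; apply/eqP.
apply: (le_trans (C1 x)); apply: ler_wpM2r => //; exact: ip_ge0.
Qed.

Lemma spec_T n d (A : 'M[R]_(n, d)) (sig : R) :
  (forall x : 'cV_d, ip (A *m x) (A *m x) <= sig^+2 * ip x x) ->
  forall v : 'cV_n, ip (A^T *m v) (A^T *m v) <= sig^+2 * ip v v.
Proof.
move=> H v.
set t := ip (A^T *m v) (A^T *m v).
have t0 : 0 <= t by exact: ip_ge0.
have p0 := ip_ge0 v.
have e : t = ip v (A *m (A^T *m v)) by rewrite ipMl.
have h : t ^+ 2 <= ip v v * (sig^+2 * t).
  rewrite {1}e; apply: (le_trans (ip_CS _ _)); apply: ler_wpM2l => //; exact: H.
have [->|tp] := eqVneq t 0; first by apply: mulr_ge0 => //; exact: sqr_ge0.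
have tpos : 0 < t by rewrite lt_def tp t0.
rewrite -(ler_pM2r tpos); move: h; rewrite expr2; nra.
Qed.

End SpecM.
Import SpecM.

Module AnaM.
Import Order.TTheory GRing.Theory Num.Theory.
Local Open Scope R_scope.

Lemma dotI n (u v : vec n) : dot u v = ip (cv u) (cv v).
Proof. by rewrite dotE. Qed.

Lemma dot_sym n (u v : vec n) : dot u v = dot v u.
Proof. by rewrite !dotI ipC. Qed.
Lemma dot_vadd_r n (u v w : vec n) : dot u (vadd v w) = dot u v + dot u w.
Proof. by rewrite !dotI cv_vadd ipDr. Qed.
Lemma dot_vsub_r n (u v w : vec n) : dot u (vsub v w) = dot u v - dot u w.
Proof. by rewrite !dotI cv_vsub ipBr. Qed.
Lemma dot_vscale_r n a (u v : vec n) : dot u (vscale a v) = a * dot u v.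
Proof. by rewrite !dotI cv_vscale ipZr. Qed.
Lemma dot_vzero_r n (u : vec n) : dot u vzero = 0.
Proof. by rewrite !dotI cv_vzero ip0r. Qed.
Lemma dot_vadd_l n (u v w : vec n) : dot (vadd v w) u = dot v u + dot w u.
Proof. by rewrite dot_sym dot_vadd_r !(dot_sym u). Qed.
Lemma dot_vsub_l n (u v w : vec n) : dot (vsub v w) u = dot v u - dot w u.
Proof. by rewrite dot_sym dot_vsub_r !(dot_sym u). Qed.
Lemma dot_vscale_l n a (u v : vec n) : dot (vscale a v) u = a * dot v u.
Proof. by rewrite dot_sym dot_vscale_r !(dot_sym u). Qed.
Lemma dot_ge0 n (u : vec n) : 0 <= dot u u.
Proof. rewrite dotI; apply/RleP; exact: ip_ge0. Qed.
Lemma dot_eq0 n (u : vec n) : dot u u = 0 -> u = vzero.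
Proof. rewrite dotI => /ip_eq0 h; apply: cv_inj; by rewrite h cv_vzero. Qed.

Lemma norm2_sq n (u : vec n) : norm2 u ^ 2 = dot u u.
Proof. rewrite /norm2; apply: pow2_sqrt; exact: dot_ge0. Qed.

Lemma norm2_ge0 n (u : vec n) : 0 <= norm2 u.
Proof. exact: sqrt_pos. Qed.

Lemma norm2_vscale n t (u : vec n) : norm2 (vscale t u) = Rabs t * norm2 u.
Proof.
rewrite /norm2 dot_vscale_l dot_vscale_r -Rmult_assoc sqrt_mult_alt.
  by rewrite -(sqrt_Rsqr_abs t).
exact: Rle_0_sqr.
Qed.

Lemma vsub_vadd n (y h : vec n) : vsub (vadd y h) y = h.
Proof. apply: functional_extensionality => i; rewrite /vsub /vadd; lra. Qed.

Lemma vadd_vscale0 n (y : vec n) t : vadd y (vscale t vzero) = y.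
Proof. apply: functional_extensionality => i; rewrite /vadd /vscale /vzero; lra. Qed.

Lemma eps_ge0 (S : R) : (forall e, 0 < e -> - e <= S) -> 0 <= S.
Proof.
move=> H; destruct (Rle_or_lt 0 S) as [h|h]; first by [].
have := H (- S / 2) ltac:(lra); lra.
Qed.

Lemma pos_mul_nonneg (t X : R) : 0 < t -> 0 <= t * X -> 0 <= X.
Proof. move=> ht h; nra. Qed.

Lemma norm2_pos n (u : vec n) : dot u u <> 0 -> 0 < norm2 u.
Proof.
move=> h; rewrite /norm2; apply: sqrt_lt_R0.
have := dot_ge0 u; lra.
Qed.

Lemma vec_eq_vzero n (u : vec n) : dot u u = 0 -> forall i, u i = 0.
Proof. by move=> /dot_eq0 ->. Qed.

Section Analytic.
Variables (n : nat) (f : vec n -> R) (g : vec n -> vec n).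
Hypothesis Hg : is_gradient f g.

Lemma grad_bound L : lipschitz L f -> 0 <= L -> forall y, norm2 (g y) <= L.
Proof.
move=> HL L0 y.
set v := g y.
destruct (Req_dec (dot v v) 0) as [h0|h0].
  by rewrite /norm2 h0 sqrt_0.
have Np := norm2_pos h0.
set N := norm2 v in Np *.
have : 0 <= L - N.
  apply: eps_ge0 => e ep.
  have [del [delp Hd]] := Hg y ep.
  set t := del / (2 * N).
  have tp : 0 < t by rewrite /t; apply: Rdiv_lt_0_compat; lra.
  have ntv : norm2 (vscale t v) = t * N by rewrite norm2_vscale Rabs_pos_eq //; exact: Rlt_le.
  have ntv2 : t * N = del / 2 by rewrite /t; field; lra.
  have := Hd (vscale t v) ltac:(rewrite ntv; lra).
  have := HL (vadd y (vscale t v)) y.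
  rewrite vsub_vadd ntv dot_vscale_r -(norm2_sq v) -/N.
  set F := f (vadd y (vscale t v)) - f y.
  move=> h1 h2.
  have h3 : t * N * N <= t * N * (L + e).
    have ha := Rle_trans _ _ _ (Rle_abs F) h1.
    have hb : t * N ^ 2 - F <= e * (t * N).
      apply: Rle_trans h2; rewrite Rabs_minus_sym; exact: Rle_abs.
    have -> : t * N * N = t * N ^ 2 by ring.
    have -> : t * N * (L + e) = L * (t * N) + e * (t * N) by ring.
    lra.
  have tN : 0 < t * N by nra.
  have : N <= L + e.
    apply: (Rmult_le_reg_l (t * N)) => //; lra.
  lra.
lra.
Qed.

Lemma convex_comb (w y : vec n) t :
  vadd (vscale t w) (vscale (1 - t) y) = vadd y (vscale t (vsub w y)).
Proof. apply: functional_extensionality => i; rewrite /vadd /vscale /vsub; ring. Qed.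

Lemma grad_ineq : convex f -> forall y w, f y + dot (g y) (vsub w y) <= f w.
Proof.
move=> Hc y w.
set h := vsub w y.
destruct (Req_dec (dot h h) 0) as [h0|h0].
  have hz := dot_eq0 h0.
  have -> : w = y.
    apply: functional_extensionality => i.
    have := f_equal (fun u => u i) hz; rewrite /h /vsub /vzero; lra.
  rewrite hz dot_vzero_r; lra.
have Np := norm2_pos h0.
set N := norm2 h in Np *.
suff : 0 <= f w - f y - dot (g y) h by lra.
apply: eps_ge0 => e ep.
have [del [delp Hd]] := Hg y (Rdiv_lt_0_compat _ _ ep Np).
set t := Rmin 1 (del / (2 * N)).
have t1 : t <= 1 by apply: Rmin_l.
have t2 : t <= del / (2 * N) by apply: Rmin_r.
have tp : 0 < t.
  apply: Rmin_glb_lt; first lra.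
  apply: Rdiv_lt_0_compat; lra.
have ntv : norm2 (vscale t h) = t * N by rewrite norm2_vscale Rabs_pos_eq //; exact: Rlt_le.
have tNd : t * N <= del / 2.
  have : t * N <= del / (2 * N) * N by apply: Rmult_le_compat_r; lra.
  have -> : del / (2 * N) * N = del / 2 by field; lra.
  by [].
have := Hd (vscale t h) ltac:(rewrite ntv; split; [nra|lra]).
have := Hc w y t ltac:(lra).
rewrite convex_comb -/h ntv dot_vscale_r.
set F := f (vadd y (vscale t h)).
move=> hc hd.
have hd2 : f y + t * dot (g y) h - e / N * (t * N) <= F.
  have := Rle_abs (- (F - f y - t * dot (g y) h)); rewrite Rabs_Ropp => hh.
  have := Rle_trans _ _ _ hh hd; lra.
have e1 : e / N * (t * N) = t * e by field; lra.
rewrite e1 in hd2.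
have : 0 <= t * (f w - f y - dot (g y) h + e).
  have -> : t * (f w - f y - dot (g y) h + e) = (t * f w + (1 - t) * f y) - (f y + t * dot (g y) h - t * e) by ring.
  lra.
move=> /(pos_mul_nonneg tp); lra.
Qed.

Lemma first_order (y0 v : vec n) (b c : R) :
  (forall t, 0 < t -> 0 <= f (vadd y0 (vscale t v)) - f y0 + t * b + t ^ 2 * c) ->
  0 <= dot (g y0) v + b.
Proof.
move=> H.
apply: eps_ge0 => e ep.
have cp : 0 < Rabs c + 1 by have := Rabs_pos c; lra.
destruct (Req_dec (dot v v) 0) as [h0|h0].
  have vz := dot_eq0 h0.
  rewrite vz dot_vzero_r Rplus_0_l.
  set t := e / (Rabs c + 1).
  have tp : 0 < t by apply: Rdiv_lt_0_compat.
  have := H t tp; rewrite vz vadd_vscale0 Rminus_diag Rplus_0_l => h.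
  have h2 : 0 <= b + t * c.
    apply: (pos_mul_nonneg tp); have -> : t * (b + t * c) = t * b + t ^ 2 * c by ring.
    by [].
  have tc : t * Rabs c < e.
    have -> : e = t * (Rabs c + 1) by rewrite /t; field; lra.
    nra.
  have hm := Rmult_le_compat_l t c (Rabs c) (Rlt_le _ _ tp) (Rle_abs c).
  lra.
have Np := norm2_pos h0.
set N := norm2 v in Np *.
have [del [delp Hd]] := Hg y0 (Rdiv_lt_0_compat (e / 2) N ltac:(lra) Np).
set t := Rmin (del / (2 * N)) (e / (2 * (Rabs c + 1))).
have t1 : t <= del / (2 * N) by apply: Rmin_l.
have t2 : t <= e / (2 * (Rabs c + 1)) by apply: Rmin_r.
have tp : 0 < t.
  apply: Rmin_glb_lt; apply: Rdiv_lt_0_compat; lra.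
have ntv : norm2 (vscale t v) = t * N by rewrite norm2_vscale Rabs_pos_eq //; exact: Rlt_le.
have tNd : t * N <= del / 2.
  have : t * N <= del / (2 * N) * N by apply: Rmult_le_compat_r; lra.
  have -> : del / (2 * N) * N = del / 2 by field; lra.
  by [].
have := Hd (vscale t v) ltac:(rewrite ntv; split; [nra|lra]).
rewrite ntv dot_vscale_r.
set F := f (vadd y0 (vscale t v)).
move=> hd.
have hd2 : F <= f y0 + t * dot (g y0) v + e / 2 / N * (t * N).
  have := Rle_abs (F - f y0 - t * dot (g y0) v) => hh.
  have := Rle_trans _ _ _ hh hd; lra.
have e1 : e / 2 / N * (t * N) = t * (e / 2) by field; lra.
rewrite e1 in hd2.
have := H t tp; rewrite -/F => hH.
have tc : t * Rabs c <= e / 2.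
  have : t * (Rabs c + 1) <= e / (2 * (Rabs c + 1)) * (Rabs c + 1)
    by apply: Rmult_le_compat_r; lra.
  have -> : e / (2 * (Rabs c + 1)) * (Rabs c + 1) = e / 2 by field; lra.
  nra.
have : 0 <= t * (dot (g y0) v + b + e / 2 + t * c).
  have -> : t * (dot (g y0) v + b + e / 2 + t * c) =
    (f y0 + t * dot (g y0) v + t * (e / 2)) - f y0 + t * b + t ^ 2 * c by ring.
  lra.
move=> /(pos_mul_nonneg tp) hh.
have := Rle_abs c => hc.
have : t * c <= e / 2 by nra.
lra.
Qed.
End Analytic.

End AnaM.
Import AnaM.

Module MainM.
Import Order.TTheory GRing.Theory Num.Theory.
Local Open Scope R_scope.

Lemma mv_lin n d (A : mat n d) x h t :
  mv A (vadd x (vscale t h)) = vadd (mv A x) (vscale t (mv A h)).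
Proof.
apply: cv_inj; rewrite cv_mv !cv_vadd !cv_vscale !cv_mv.
by rewrite mulmxDr -scalemxAr.
Qed.

Lemma cv_colK k (hc : 'cV[R]_k) : cv (fun i => hc i 0%R) = hc.
Proof. by apply/colP => i; rewrite mxE. Qed.

Lemma ip_nonneg_zero k (u : 'cV[R]_k) : (forall hv : vec k, 0 <= ip u (cv hv)) -> u = 0%R.
Proof.
move=> H; apply: ip_eq0.
have := H (fun i => (- u)%R i 0%R); rewrite cv_colK ipNr -RoppE => h.
have := ip_ge0 u => /RleP h2.
move: h2; rewrite -!R0E => h2; lra.
Qed.

Lemma min_FO n k p (f : vec n -> R) g (M : vec k -> vec n) (N : vec k -> vec p) x lam :
  is_gradient f g ->
  (forall x h t, M (vadd x (vscale t h)) = vadd (M x) (vscale t (M h))) ->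
  (forall x h t, N (vadd x (vscale t h)) = vadd (N x) (vscale t (N h))) ->
  is_minimizer (fun x => f (M x) + lam / 2 * norm2 (N x) ^ 2) x ->
  forall h, 0 <= dot (g (M x)) (M h) + lam * dot (N x) (N h).
Proof.
move=> Hg HM HN Hmin h.
apply: (first_order Hg (c := lam / 2 * dot (N h) (N h))) => t tp.
have := Hmin (vadd x (vscale t h)); rewrite HM HN !norm2_sq.
rewrite !dot_vadd_l !dot_vadd_r !dot_vscale_l !dot_vscale_r (dot_sym (N h) (N x)).
move=> H; ring_simplify; ring_simplify in H; lra.
Qed.

Lemma lip_nonneg n (f : vec n -> R) L : (0 < n)%N -> lipschitz L f -> 0 <= L.
Proof.
move=> npos HL.
have := HL vzero (fun _ => 1).
set u := vsub vzero (fun _ => 1).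
have hu : dot u u <> 0.
  move=> /dot_eq0 h; have := f_equal (fun w => w (Ordinal npos)) h; rewrite /u /vsub /vzero; lra.
have := norm2_pos hu => hp.
have := Rabs_pos (f vzero - f (fun _ => 1)) => ha h.
nra.
Qed.

Lemma mx_PSperp d m (S : mat d m) (Mp : mat m m) :
  mx (PSperp S Mp) = QSm (mx S) (mx Mp).
Proof. by rewrite /PSperp mx_msub mx_idm /Defs.PS !mx_mm mx_tr. Qed.

Lemma q_mat n d m (A : mat n d) (S : mat d m) (Mp : mat m m) (D : vec n) :
  dot D (mv A (mv (PSperp S Mp) (mv (tr A) D))) =
  ip (cv D) (mx A *m (QSm (mx S) (mx Mp) *m ((mx A)^T *m cv D))).
Proof. by rewrite dotI !cv_mv mx_PSperp mx_tr. Qed.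

Lemma sqrt_div_le (q N B : R) : 0 < N -> 0 <= B -> q <= B ^ 2 * N -> sqrt (q / N) <= B.
Proof.
move=> Np B0 h.
rewrite -(sqrt_pow2 B B0); apply: sqrt_le_1_alt.
apply: (Rmult_le_reg_r N) => //.
have -> : q / N * N = q by field; lra.
by [].
Qed.

Lemma le_sqrt_div (q N B : R) : 0 < N -> 0 <= B -> sqrt (q / N) <= B -> q <= B ^ 2 * N.
Proof.
move=> Np B0 h.
destruct (Rle_or_lt q 0) as [hq|hq].
  have : 0 <= B ^ 2 * N by nra.
  lra.
have qN : 0 <= q / N by apply: Rlt_le; apply: Rdiv_lt_0_compat.
have : q / N <= B ^ 2.
  rewrite -(pow2_sqrt (q / N) qN); apply: pow_incr; split => //; exact: sqrt_pos.
move=> h2.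
have := Rmult_le_compat_r N _ _ (Rlt_le _ _ Np) h2.
have -> : q / N * N = q by field; lra.
by [].
Qed.


End MainM.
Import MainM.

Import Order.TTheory GRing.Theory Num.Theory.
Theorem theorem4 (n d m : nat) (A : mat n d) (sigma1 : R) (S : mat d m)
  (lambda L : R) (f : vec n -> R) (gradf : vec n -> vec n)
  (xstar : vec d) (alphastar : vec m) (Mp : mat m m) (Zf : R) :
  is_largest_singular_value A sigma1 ->
  0 < lambda ->
  convex f -> is_gradient f gradf -> lipschitz L f ->
  is_minimizer (fun x : vec d => f (mv A x) + lambda / 2 * norm2 x ^ 2) xstar ->
  is_minimizer (fun a : vec m => f (mv A (mv S a)) + lambda / 2 * norm2 (mv S a) ^ 2)
    alphastar ->
  is_pinv (mm (tr S) S) Mp ->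
  is_lub (Zf_values f (gradf (mv A xstar)) A S Mp) Zf ->
  let xtilde := vscale (- / lambda) (mv (tr A) (gradf (mv A (mv S alphastar)))) in
  norm2 (vsub xtilde xstar) <= 6 * L / lambda * sqrt (sigma1 * Zf).
Proof.
move=> [sig0 [_ Heig]] lam0 Hconv Hgrad Hlip Hxs Hal Hpinv Hlub xtilde.
set zs := gradf (mv A xstar).
set zh := gradf (mv A (mv S alphastar)).
have Hpen : penrose ((mx S)^T *m mx S) (mx Mp).
  have eM : ((mx S)^T *m mx S)%R = mx (mm (tr S) S) by rewrite mx_mm mx_tr.
  move: Hpinv => [p1 [p2 [p3 p4]]]; rewrite eM; split.
  - by rewrite -!mx_mm p1.
  - by rewrite -!mx_mm p2.
  - by rewrite -!mx_mm -mx_tr p3.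
  - by rewrite -!mx_mm -mx_tr p4.
have Hspec : forall x : 'cV_d, (ip (mx A *m x) (mx A *m x) <= sigma1^+2 * ip x x)%R.
  apply: spec_bound => mu v vn0 ev.
  have := Heig mu (fun i => v i 0%R).
  rewrite -RpowE => H; apply/RleP; apply: H.
    move=> e; move/eqP: vn0; apply; rewrite -(cv_colK v) e cv_vzero //.
  apply: cv_inj; rewrite cv_mv cv_vscale cv_colK mx_mm mx_tr; exact: ev.
have HspecT := spec_T Hspec.
have Zf0 : 0 <= Zf by apply: (proj1 Hlub); left.
have Zfs : Zf <= sigma1.
  apply: (proj2 Hlub) => r [->|[z [_ [Hne ->]]]] //.
  set D := vsub z zs.
  have hD : dot D D <> 0 by move=> /dot_eq0.
  apply: sqrt_div_le => //.
    by rewrite norm2_sq; have := dot_ge0 D; lra.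
  rewrite norm2_sq q_mat dotI (ipMl (mx A)) -/(ip _ _) (ipQ Hpen).
  apply/RleP; apply: (le_trans (QS_contr Hpen _)); rewrite RpowE; exact: HspecT.
have HZq : dot (vsub zh zs) (mv A (mv (PSperp S Mp) (mv (tr A) (vsub zh zs))))
           <= Zf ^ 2 * dot (vsub zh zs) (vsub zh zs).
  destruct (Req_dec (dot (vsub zh zs) (vsub zh zs)) 0) as [h0|h0].
    by rewrite h0 (dot_eq0 h0) dot_sym dot_vzero_r Rmult_0_r; apply: Rle_refl.
  rewrite -norm2_sq; apply: le_sqrt_div => //.
    by rewrite norm2_sq; have := dot_ge0 (vsub zh zs); lra.
  apply: (proj1 Hlub); right; exists zh; split.
    exists (dot (mv A (mv S alphastar)) zh - f (mv A (mv S alphastar))) => w.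
    have := grad_ineq Hgrad Hconv (mv A (mv S alphastar)) w.
    rewrite dot_vsub_r -/zh => h; rewrite (dot_sym w zh) (dot_sym (mv A (mv S alphastar)) zh); lra.
  split; first by move=> e; apply: h0; rewrite e dot_vzero_r.
  by [].
have Hmono : 0 <= dot (vsub zh zs) (vsub (mv A (mv S alphastar)) (mv A xstar)).
  have h1 := grad_ineq Hgrad Hconv (mv A xstar) (mv A (mv S alphastar)).
  have h2 := grad_ineq Hgrad Hconv (mv A (mv S alphastar)) (mv A xstar).
  rewrite -/zs in h1; rewrite -/zh in h2.
  rewrite dot_vsub_l; rewrite !dot_vsub_r in h1 h2 *; lra.
have FO1 := min_FO (N := fun x : vec d => x) Hgrad (@mv_lin _ _ A)
  (fun x h t => erefl) Hxs.
have linAS : forall x h t, mv A (mv S (vadd x (vscale t h))) =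
    vadd (mv A (mv S x)) (vscale t (mv A (mv S h))).
  by move=> x h t; rewrite !mv_lin.
have FO2 := min_FO (M := fun a => mv A (mv S a)) (N := mv S) Hgrad
  linAS (@mv_lin _ _ S) Hal.
rewrite -/zs in FO1; rewrite -/zh in FO2.
have H1 : ((mx A)^T *m cv zs + lambda *: cv xstar = 0)%R.
  apply: ip_nonneg_zero => hv; rewrite ipDl ipZl -ipMl.
  have := FO1 hv; rewrite !dotI cv_mv; exact.
have H2 : ((mx S)^T *m ((mx A)^T *m cv zh + lambda *: (mx S *m cv alphastar)) = 0)%R.
  apply: ip_nonneg_zero => hv; rewrite -ipMl ipDl ipZl -ipMl.
  have := FO2 hv; rewrite !dotI !cv_mv; exact.
have [L' [L'0 [HLg HL']]] : exists L', 0 <= L' /\ (forall y, norm2 (gradf y) <= L') /\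
    6 * L' / lambda * sqrt (sigma1 * Zf) <= 6 * L / lambda * sqrt (sigma1 * Zf).
  case: (posnP n) => [n0|npos].
  - have allz : forall z : vec n, z = vzero.
      move=> z; apply: functional_extensionality => i.
      exfalso; have := ltn_ord i; move: (nat_of_ord i) => k; rewrite n0 //.
    have Zfz : Zf = 0.
      have : Zf <= 0.
        apply: (proj2 Hlub) => r [->|[z [_ [Hne _]]]]; first lra.
        by case: Hne; apply: allz.
      lra.
    exists 0; split; first lra; split.
      move=> y; rewrite (allz (gradf y)) /norm2 dot_vzero_r sqrt_0; lra.
    rewrite Zfz !Rmult_0_r sqrt_0 !Rmult_0_r; apply: Rle_refl.
  - exists L; split; first exact: (lip_nonneg npos Hlip).
    split; first exact: (grad_bound Hgrad Hlip (lip_nonneg npos Hlip)).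
    lra.
have Hn : forall y, (ip (cv (gradf y)) (cv (gradf y)) <= L'^+2)%R.
  move=> y; rewrite -dotI -norm2_sq -RpowE; apply/RleP.
  apply: pow_incr; split; [exact: norm2_ge0|exact: HLg].
have H3 : (0 <= ip (cv zh - cv zs) (mx A *m (mx S *m cv alphastar - cv xstar)))%R.
  rewrite mulmxBr; apply/RleP; move: Hmono; rewrite dotI !cv_vsub !cv_mv //.
have H6 : (ip (cv zh - cv zs) (mx A *m (QSm (mx S) (mx Mp) *m ((mx A)^T *m (cv zh - cv zs))))
   <= Zf^+2 * ip (cv zh - cv zs) (cv zh - cv zs))%R.
  apply/RleP; move: HZq; rewrite q_mat dotI cv_vsub RpowE //.
have Hc := core (lam := lambda) (L := L') (sig := sigma1) (Zf := Zf)
  (xs := cv xstar) (al := cv alphastar) (zs := cv zs) (zh := cv zh)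
  (ltac:(by apply/RltP)) (ltac:(by apply/RleP)) (ltac:(by apply/RleP)) (ltac:(by apply/RleP)) Hpen HspecT (Hn _) (Hn _)
  H1 H2 H3 H6.
have e6 : (6%:R : R)%R = 6 by rewrite IZRposE INRE.
rewrite e6 in Hc.
have hw : dot (vsub xtilde xstar) (vsub xtilde xstar) <= (6 * L' / lambda) ^ 2 * (sigma1 * Zf).
  rewrite dotI cv_vsub /xtilde cv_vscale cv_mv mx_tr RpowE; apply/RleP; exact: Hc.
apply: Rle_trans HL'.
rewrite /norm2.
have p0 : 0 <= 6 * L' / lambda.
  apply: Rmult_le_pos; [lra|apply: Rlt_le; apply: Rinv_0_lt_compat; lra].
rewrite -(sqrt_pow2 _ p0) -sqrt_mult_alt; last exact: pow2_ge_0.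
exact: sqrt_le_1_alt.
Qed.
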